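(* Let $L\ge1$ and $\Gamma^0\in\{0,1\}^L$ (coordinates indexed by $\mathbb{Z}/L\mathbb{Z}$, viewed as a cycle). Color the positions so that each maximal cyclic interval (run) of equal values in $\Gamma^0$ receives its own distinct color, and run the following colored copying process $\tilde\Gamma^i$: given $\tilde\Gamma^i$, choose a permutation $\sigma$ of $\{0,\dots,L-1\}$ uniformly at random, set $\Delta_0=\tilde\Gamma^i$, and for $1\le j\le L$ let $\Delta_j$ be obtained from $\Delta_{j-1}$ by giving position $\sigma(j-1)$ the current color of position $(\sigma(j-1)+1)\bmod L$ (all other positions unchanged); set $\tilde\Gamma^{i+1}=\Delta_L$. Fix one color and let $X_i$ be the number of positions of that color in $\tilde\Gamma^i$. Then $(X_i)_{i\ge0}$ is a martingale with respect to the filtration generated by $(\tilde\Gamma^i)_{i\ge0}$. *)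

(* Defs.v *)
From mathcomp Require Import all_boot all_order all_algebra all_fingroup.
Set Implicit Arguments. Unset Strict Implicit. Unset Printing Implicit Defensive.

(* Positions are 'I_L = Z/LZ; the cyclic successor of p is ordS p (= (p+1) mod L).
   Colors are natural numbers; a colored configuration is {ffun 'I_L -> nat}. *)

(* Forward cyclic interval from i to j (i, i+1, ..., j mod L) on which g is constant. *)
Definition fwd_const L (g : {ffun 'I_L -> bool}) (i j : 'I_L) : Prop :=
  exists k : nat, k < L /\ (i + k) %% L = j /\
    forall t, t <= k -> forall p : 'I_L, p = (i + t) %% L :> nat -> g p = g i.

Definition same_run L (g : {ffun 'I_L -> bool}) (i j : 'I_L) : Prop :=
  fwd_const g i j \/ fwd_const g j i.

Definition run_coloring L (g : {ffun 'I_L -> bool}) (c0 : {ffun 'I_L -> nat}) : Prop :=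
  forall i j : 'I_L, c0 i = c0 j <-> same_run g i j.

Definition copy_at L (c : {ffun 'I_L -> nat}) (p : 'I_L) : {ffun 'I_L -> nat} :=
  [ffun q => if q == p then c (ordS p) else c q].

(* one sweep: Delta_0 = c, Delta_j = copy_at Delta_{j-1} (sigma (j-1)), result Delta_L *)
Definition sweep L (c : {ffun 'I_L -> nat}) (sigma : {perm 'I_L}) : {ffun 'I_L -> nat} :=
  foldl (fun d (j : 'I_L) => copy_at d (sigma j)) c (enum 'I_L).

Definition run_proc L (c0 : {ffun 'I_L -> nat}) (s : seq {perm 'I_L}) :=
  foldl (@sweep L) c0 s.

Definition count_color L (a : nat) (c : {ffun 'I_L -> nat}) : nat :=
  #|[set p : 'I_L | c p == a]|.

(* The process is driven by i.i.d. uniform permutations sigma_0, sigma_1, ...;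
   Gamma^k = run_proc c0 (take k s).  Over the uniform (finite) probability space of
   (n+1)-tuples of permutations, the sigma-algebra F_n generated by
   (Gamma^0,...,Gamma^n) is atomic, with atoms {Gamma^k = h k for all k <= n}.
   X_n = count_color a Gamma^n is adapted and bounded, and the martingale property
   E[X_{n+1} | F_n] = X_n is equivalent to E[X_{n+1} 1_A] = E[X_n 1_A] for every atom A;
   the uniform normalising constant 1/(L!)^(n+1) cancels on both sides. *)
Definition colored_martingale L (c0 : {ffun 'I_L -> nat}) (a : nat) : Prop :=
  forall (n : nat) (h : 'I_n.+1 -> {ffun 'I_L -> nat}),
    \sum_(s : n.+1.-tuple {perm 'I_L} |
            [forall k : 'I_n.+1, run_proc c0 (take k s) == h k])
        count_color a (run_proc c0 s)
    = \sum_(s : n.+1.-tuple {perm 'I_L} |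
            [forall k : 'I_n.+1, run_proc c0 (take k s) == h k])
        count_color a (run_proc c0 (take n s)).

(* Main.v *)
Require Import Defs.
From mathcomp Require Import all_boot all_order all_algebra all_fingroup.
Set Implicit Arguments. Unset Strict Implicit. Unset Printing Implicit Defensive.
Lemma sum_rcons (T : finType) m (F : seq T -> nat) :
  \sum_(s : m.+1.-tuple T) F s = \sum_(t : m.-tuple T) \sum_(x : T) F (rcons t x).
Proof.
rewrite pair_big /=.
pose h := fun p : m.-tuple T * T => [tuple of rcons p.1 p.2].
pose hi := fun s : m.+1.-tuple T =>
  ([tuple of belast (thead s) (behead_tuple s)], last (thead s) (behead s)).
have hb : bijective h.
  exists hi.
  - case=> t x; rewrite /h /hi /=.
    case: t => [[|y t'] /= Ht].
    + by rewrite /thead; congr pair; apply: val_inj.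
    + rewrite /thead (tnth_nth y) /=; congr pair; last by rewrite last_rcons.
      by apply: val_inj => /=; rewrite belast_rcons.
  - move=> s; case/tupleP: s => x t; rewrite /h /hi /=.
    apply: val_inj => /=; rewrite theadE /=.
    by rewrite -lastI.
rewrite (reindex h) /=; first by [].
by apply: onW_bij.
Qed.

Import GRing.Theory.
Local Open Scope ring_scope.


Section S.
Variable n : nat.
Local Notation I := 'I_n.+1.

Lemma ordSE (x : I) : ordS x = x + Zp1.
Proof. apply: val_inj => /=. rewrite /Zp1 /inZp /= modnDmr. by rewrite addn1. Qed.

Definition upd (d : {ffun I -> I}) (p : I) : {ffun I -> I} :=
  [ffun q => if q == p then d (ordS p) else d q].

Definition SF (f : {ffun I -> I}) (ps : seq I) := foldl upd f ps.

Lemma sweep_gen (sigma : {perm I}) (c : {ffun I -> nat}) (s : seq I) (f : {ffun I -> I}) :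
  foldl (fun d j => copy_at d (sigma j)) [ffun q => c (f q)] s
  = [ffun q => c (SF f (map sigma s) q)].
Proof.
elim: s f => [|x s IH] f /=; first by [].
rewrite -IH; congr foldl.
by apply/ffunP => q; rewrite !ffunE; case: ifP.
Qed.

Definition Sg (sigma : {perm I}) := SF [ffun q => q] (map sigma (enum I)).

Lemma sweepE c sigma : sweep c sigma = [ffun q => c (Sg sigma q)].
Proof.
rewrite /sweep -sweep_gen; congr foldl; by apply/ffunP => q; rewrite !ffunE.
Qed.

Lemma SF_shift (ps : seq I) (f : {ffun I -> I}) (t : I) :
  SF [ffun q => f (q - t) + t] (map (fun x => x + t) ps)
  = [ffun q => SF f ps (q - t) + t].
Proof.
elim: ps f => [|p ps IH] f /=; first by [].
rewrite -IH; congr foldl.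
apply/ffunP => q; rewrite !ffunE /=.
have -> : (q == p + t) = (q - t == p) by rewrite subr_eq.
rewrite !ordSE. case: (q - t == p) => //. by rewrite addrAC addrK.
Qed.

Lemma Sg_shift (sigma : {perm I}) (t : I) (q : I) :
  Sg (sigma * perm (@addIr _ t))%g q = Sg sigma (q - t) + t.
Proof.
have E : map (sigma * perm (@addIr _ t))%g (enum I) = map (fun x => x + t) (map sigma (enum I)).
  by elim: (enum I) => //= x s ->; rewrite permM permE.
rewrite /Sg E.
have F : [ffun q => [ffun q : I => q] (q - t) + t] = [ffun q : I => q].
  by apply/ffunP => x; rewrite !ffunE subrK.
by rewrite -{1}F SF_shift ffunE.
Qed.

Lemma countE a (d : {ffun I -> nat}) :
  count_color a d = (\sum_(p : I) (if d p == a then 1 else 0))%N.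
Proof. by rewrite /count_color cardsE -sum1_card big_mkcond. Qed.

Lemma sweep_sum a c :
  (\sum_(sigma : {perm I}) count_color a (sweep c sigma)
   = \sum_(sigma : {perm I}) count_color a c)%N.
Proof.
under eq_bigr do rewrite countE sweepE.
rewrite exchange_big /=.
have H : forall p : I, (\sum_(sigma : {perm I}) (if [ffun q => c (Sg sigma q)] p == a then 1 else 0)
   = \sum_(sigma : {perm I}) (if c (Sg sigma (0%R : I) + p)%R == a then 1 else 0))%N.
  move=> p; rewrite (reindex_inj (@mulIg _ (perm (@addIr _ p)))) /=.
  by apply: eq_bigr => sigma _; rewrite ffunE Sg_shift subrr.
under eq_bigr do rewrite H.
rewrite exchange_big /=; apply: eq_bigr => sigma _.
by rewrite countE [RHS](reindex_inj (@addrI _ (Sg sigma (0%R : I)))).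
Qed.
End S.

Local Close Scope ring_scope.
Theorem lemma3 (L : nat) (hL : 0 < L) (g0 : {ffun 'I_L -> bool})
  (c0 : {ffun 'I_L -> nat}) (hc0 : run_coloring g0 c0)
  (a : nat) (ha : exists i : 'I_L, c0 i = a) :
  colored_martingale c0 a.
Proof.
case: L hL g0 c0 hc0 ha => [//|n] _ g0 c0 _ _.
move=> m hh.
rewrite [LHS]big_mkcond [RHS]big_mkcond /=.
rewrite (@sum_rcons _ m (fun s : seq {perm 'I_n.+1} =>
   if [forall k : 'I_m.+1, run_proc c0 (take k s) == hh k]
   then count_color a (run_proc c0 s) else 0%N)).
rewrite (@sum_rcons _ m (fun s : seq {perm 'I_n.+1} =>
   if [forall k : 'I_m.+1, run_proc c0 (take k s) == hh k]
   then count_color a (run_proc c0 (take m s)) else 0%N)).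
apply: eq_bigr => t _.
have Ek : forall x, [forall k : 'I_m.+1, run_proc c0 (take k (rcons t x)) == hh k]
               = [forall k : 'I_m.+1, run_proc c0 (take k t) == hh k].
  move=> x; apply: eq_forallb => k.
  by rewrite -cats1 takel_cat // size_tuple -ltnS.
have Em : forall x, take m (rcons t x) = t.
  by move=> x; rewrite -cats1 takel_cat ?size_tuple // -{1}(size_tuple t) take_size.
under eq_bigr do rewrite Ek /run_proc foldl_rcons.
under [RHS]eq_bigr do rewrite Ek Em.
case: ifP => _; last by rewrite !big1.
exact: sweep_sum.
Qed.
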